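(* Let $n\in\mathbb{Z}$ with $|n|\geq 1$, $\alpha>0$, $R>0$ and $\kappa\in\mathbb{R}$. Suppose $u$ is a nontrivial solution of the $n$-vortex equation $$(ru_r)_r-\frac{n^2}{r}u+\frac{2ru^3}{1+\alpha u^2}-2\kappa ru=0\ \text{ on } (0,R),\qquad u(0)=0,\quad u(R)=0,$$ which has finite energy, i.e. $\mathcal{E}(u)<\infty$. Then $$\kappa<\alpha^{-1}-\frac{r_0^2+n^2}{2R^2},$$ where $r_0\approx 2.404825$ is the first positive zero of the Bessel function $J_0$.
   Context: The energy functional is $\mathcal{E}(u)=\frac12\int_0^R\left\{ru_r^2+\frac{1}{r}u^2+r\ln(1+\alpha u^2)\right\}dr$, where $u=u(r)$ is a real-valued function on $[0,R]$ and $u_r=du/dr$. *)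

(* Defs.v *)
From Stdlib Require Import Reals Lra ZArith.
From Coquelicot Require Import Coquelicot.
Open Scope R_scope.

Definition J0 (x : R) : R :=
  Series (fun k : nat => (-1) ^ k / (INR (fact k)) ^ 2 * (x / 2) ^ (2 * k)).

Definition first_pos_zero_J0 (r0 : R) : Prop :=
  0 < r0 /\ J0 r0 = 0 /\ (forall x, 0 < x < r0 -> J0 x <> 0).

(* Integrand of the energy functional (times 2). *)
Definition energy_density (alpha : R) (u : R -> R) (r : R) : R :=
  r * (Derive u r) ^ 2 + / r * (u r) ^ 2 + r * ln (1 + alpha * (u r) ^ 2).

Definition energy_is (alpha Rad : R) (u : R -> R) (E : R) : Prop :=
  is_RInt_gen (energy_density alpha u) (at_right 0) (at_left Rad) (2 * E).

(* Finite energy: the (improper) energy integral converges to a finite value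
   (the density is nonnegative, so this is the same as E(u) < +oo). *)
Definition finite_energy (alpha Rad : R) (u : R -> R) : Prop :=
  exists E : R, energy_is alpha Rad u E.

Definition vortex_ode (n : Z) (alpha kappa Rad : R) (u : R -> R) : Prop :=
  (forall r, 0 < r < Rad -> ex_derive u r) /\
  (forall r, 0 < r < Rad ->
     is_derive (fun s => s * Derive u s) r
       (IZR n ^ 2 / r * u r - 2 * r * (u r) ^ 3 / (1 + alpha * (u r) ^ 2)
        + 2 * kappa * r * u r)).

Definition vortex_bc (Rad : R) (u : R -> R) : Prop :=
  u 0 = 0 /\ u Rad = 0 /\
  filterlim u (at_right 0) (locally 0) /\ filterlim u (at_left Rad) (locally 0).

(* Main.v *)
Require Import Defs.
From Stdlib Require Import Reals Lra ZArith Classical.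
From Coquelicot Require Import Coquelicot.
Open Scope R_scope.

Definition ja (k : nat) : R := (-1) ^ k / (INR (fact k)) ^ 2.

Lemma fact_pos_R k : 0 < INR (fact k).
Proof. apply lt_0_INR, lt_O_fact. Qed.

Lemma ja_nz k : ja k <> 0.
Proof.
  unfold ja. pose proof (fact_pos_R k).
  apply Rmult_integral_contrapositive_currified.
  - apply pow_nonzero; lra.
  - apply Rinv_neq_0_compat. apply pow_nonzero; lra.
Qed.

Lemma ja_S k : ja (S k) = - ja k / (INR (S k)) ^ 2.
Proof.
  unfold ja. rewrite fact_simpl, mult_INR.
  pose proof (fact_pos_R k). pose proof (lt_0_INR (S k) (Nat.lt_0_succ k)).
  set (a := INR (S k)) in *. set (b := INR (fact k)) in *.
  change ((-1)^(S k)) with (-1 * (-1)^k). field. lra.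
Qed.

Lemma ja_radius : CV_radius ja = p_infty.
Proof.
  apply CV_radius_infinite_DAlembert. apply ja_nz.
  apply is_lim_seq_ext with (fun n => / (INR (S n) * INR (S n))).
  - intro n. rewrite ja_S. pose proof (ja_nz n).
    pose proof (lt_0_INR (S n) (Nat.lt_0_succ n)).
    replace (- ja n / INR (S n) ^ 2 / ja n) with (- / (INR (S n) * INR (S n))) by (field; lra).
    rewrite Rabs_Ropp, Rabs_pos_eq. reflexivity.
    apply Rlt_le, Rinv_0_lt_compat, Rmult_lt_0_compat; lra.
  - replace (Finite 0) with (Rbar_inv p_infty) by reflexivity.
    apply is_lim_seq_inv; [|discriminate].
    apply (is_lim_seq_mult _ _ p_infty p_infty).
    + apply (is_lim_seq_incr_1 INR p_infty). apply is_lim_seq_INR.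
    + apply (is_lim_seq_incr_1 INR p_infty). apply is_lim_seq_INR.
    + simpl. auto. all: try reflexivity.
Qed.

Lemma J0_eq x : J0 x = PSeries ja ((x/2)^2).
Proof.
  unfold J0, PSeries. apply Series_ext. intro k. unfold ja. rewrite pow_mult. reflexivity.
Qed.

Definition jb := PS_incr_1 (PS_derive ja).

Lemma jb_radius : CV_radius jb = p_infty.
Proof. unfold jb. rewrite CV_radius_incr_1, CV_radius_derive. apply ja_radius. Qed.

Lemma jb_der k : PS_derive jb k = - ja k.
Proof.
  unfold PS_derive at 1. unfold jb. change (PS_incr_1 (PS_derive ja) (S k)) with (PS_derive ja k).
  unfold PS_derive. rewrite ja_S.
  pose proof (lt_0_INR (S k) (Nat.lt_0_succ k)).
  field. lra.
Qed.

Definition J0d (x : R) : R := PSeries (PS_derive ja) ((x/2)^2) * (x/2).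
Definition Vb (x : R) : R := x * J0d x.

Lemma J0_derive x : is_derive J0 x (J0d x).
Proof.
  apply is_derive_ext with (fun y => PSeries ja ((y/2)^2)).
  { intro; symmetry; apply J0_eq. }
  unfold J0d.
  evar (d : R).
  replace (PSeries (PS_derive ja) ((x / 2) ^ 2) * (x / 2)) with d.
  apply (is_derive_comp (PSeries ja) (fun y => (y/2)^2)).
  - apply is_derive_PSeries. rewrite ja_radius. simpl. auto.
  - auto_derive. auto. reflexivity.
  - unfold d. simpl. unfold scal; simpl; unfold mult; simpl. field.
Qed.

Lemma Vb_eq x : Vb x = 2 * PSeries jb ((x/2)^2).
Proof.
  unfold Vb, J0d, jb. rewrite PSeries_incr_1. field.
Qed.

Lemma Vb_derive x : is_derive Vb x (- x * J0 x).
Proof.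
  apply is_derive_ext with (fun y => 2 * PSeries jb ((y/2)^2)).
  { intro; symmetry; apply Vb_eq. }
  evar (d : R).
  replace (- x * J0 x) with d.
  apply is_derive_scal.
  apply (is_derive_comp (PSeries jb) (fun y => (y/2)^2)).
  - apply is_derive_PSeries. rewrite jb_radius. simpl. auto.
  - auto_derive. auto. reflexivity.
  - unfold d. simpl. unfold scal; simpl; unfold mult; simpl.
    rewrite (PSeries_ext _ (PS_opp ja)) by apply jb_der.
    rewrite PSeries_opp, J0_eq. simpl pow. field.
Qed.

Lemma J0_0 : J0 0 = 1.
Proof.
  rewrite J0_eq. replace ((0/2)^2) with 0 by field. rewrite PSeries_0. unfold ja. simpl. field.
Qed.

Lemma ball_R x e y : ball x e y -> Rabs (y - x) < e.
Proof. intros H. unfold ball in H. simpl in H. unfold AbsRing_ball in H. simpl in H.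
  unfold abs, minus, plus, opp in H. simpl in H. exact H. Qed.

Lemma ball_R' x e y : Rabs (y - x) < e -> ball x e y.
Proof. intros H. unfold ball. simpl. unfold AbsRing_ball. simpl.
  unfold abs, minus, plus, opp. simpl. exact H. Qed.

Lemma at_left_ex x (Q : R -> Prop) : at_left x Q -> exists d, 0 < d /\ forall r, x - d < r < x -> Q r.
Proof.
  intros [eps H]. exists eps. split. apply cond_pos.
  intros r Hr. apply H. apply ball_R'. rewrite Rabs_left by lra. lra. lra.
Qed.

Lemma at_right_ex x (Q : R -> Prop) : at_right x Q -> exists d, 0 < d /\ forall r, x < r < x + d -> Q r.
Proof.
  intros [eps H]. exists eps. split. apply cond_pos.
  intros r Hr. apply H. apply ball_R'. rewrite Rabs_right by lra. lra. lra.
Qed.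

Lemma at_left_pt x (Q : R -> Prop) : at_left x Q -> exists r, r < x /\ Q r.
Proof. intros H. destruct (at_left_ex _ _ H) as [d [Hd H']]. exists (x - d/2). split. lra. apply H'. lra. Qed.

Lemma loc_to_right x (Q : R -> Prop) : locally x Q -> at_right x Q.
Proof. intros H. apply (filter_le_within (fun u => x < u) (F := locally x)). auto. Qed.

Lemma loc_to_left x (Q : R -> Prop) : locally x Q -> at_left x Q.
Proof. intros H. apply (filter_le_within (fun u => u < x) (F := locally x)). auto. Qed.

Lemma is_derive_opp' (f : R -> R) x l : is_derive f x l -> is_derive (fun t => - f t) x (- l).
Proof. intros H. apply (is_derive_opp f x l H). Qed.

Lemma at_left_gt q x : q < x -> at_left x (fun r => q < r).
Proof.
  intros Hq. assert (Hp : 0 < x - q) by lra. exists (mkposreal _ Hp).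
  intros y Hy Hyx. apply ball_R in Hy. simpl in Hy. rewrite Rabs_left in Hy by lra. lra.
Qed.

Lemma at_left_cont (g : R -> R) x e : continuous g x -> 0 < e ->
  at_left x (fun r => Rabs (g r - g x) < e).
Proof.
  intros Hc He. apply (filter_le_within (fun u => u < x) (F := locally x)).
  pose proof (proj1 (filterlim_locally g (g x)) Hc (mkposreal e He)) as H.
  simpl in H. revert H. apply filter_imp. intros r Hr. apply ball_R in Hr. exact Hr.
Qed.

Lemma lim_to_eps (g : R -> R) F {FF : Filter F} l e : filterlim g F (locally l) -> 0 < e ->
  F (fun r => Rabs (g r - l) < e).
Proof.
  intros Hc He.
  pose proof (proj1 (filterlim_locally g l) Hc (mkposreal e He)) as H.
  simpl in H. revert H. apply filter_imp. intros r Hr. apply ball_R in Hr. exact Hr.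
Qed.

Lemma cont_eps f b : continuity_pt f b -> forall e, 0 < e ->
  exists d, 0 < d /\ forall y, Rabs (y - b) < d -> Rabs (f y - f b) < e.
Proof.
  intros H e He. unfold continuity_pt, continue_in, limit1_in, limit_in in H.
  destruct (H e He) as [d [Hd H']]. exists d. split; auto. intros y Hy.
  destruct (Req_dec y b) as [->|Hne].
  - rewrite Rminus_eq_0, Rabs_R0. auto.
  - apply H'. split. unfold D_x, no_cond. auto. simpl. unfold R_dist. auto.
Qed.

Lemma first_zero_right f x z : x < z -> 0 < f x -> f z <= 0 ->
  (forall t, x <= t <= z -> continuity_pt f t) ->
  exists b, x < b <= z /\ f b = 0 /\ forall t, x <= t < b -> 0 < f t.
Proof.
  intros Hxz Hx Hz Hc.
  set (E := fun t => x <= t <= z /\ forall s, x <= s <= t -> 0 < f s).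
  assert (Hb : bound E). { exists z. intros t [Ht _]. lra. }
  assert (Hne : exists t, E t). { exists x. split. lra. intros s Hs. replace s with x by lra. auto. }
  destruct (completeness E Hb Hne) as [b [Hub Hlub]].
  assert (Hxb : x <= b). { apply Hub. destruct Hne. unfold E. split. lra. intros s Hs. replace s with x by lra. auto. }
  assert (Hbz : b <= z). { apply Hlub. intros t [Ht _]. lra. }
  assert (Hpos : forall t, x <= t < b -> 0 < f t).
  { intros t Ht. destruct (classic (exists e, E e /\ t < e)) as [[e [[He1 He2] Hte]]|Hn].
    - apply He2. lra.
    - exfalso. assert (b <= t). { apply Hlub. intros e He. apply Rnot_lt_le. intro. apply Hn. eauto. } lra. }
  assert (Hge : 0 <= f b).
  { apply Rnot_lt_le. intro Hneg. assert (Hbx : x < b). { destruct (Req_dec x b); [subst; lra|lra]. }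
    destruct (cont_eps f b (Hc b ltac:(lra)) (- f b) ltac:(lra)) as [d [Hd Hd']].
    set (t := Rmax x (b - d/2)).
    assert (x <= t < b). { unfold t. split. apply Rmax_l. apply Rmax_lub_lt; lra. }
    assert (Rabs (t - b) < d). { rewrite Rabs_left. unfold t. assert (b - d/2 <= Rmax x (b - d/2)) by apply Rmax_r. lra. lra. }
    specialize (Hd' t H0). specialize (Hpos t H).
    apply Rabs_def2 in Hd'. lra. }
  assert (Hle : f b <= 0).
  { apply Rnot_lt_le. intro Hp. assert (Hbz' : b < z). { destruct (Req_dec b z); [subst; lra|lra]. }
    destruct (cont_eps f b (Hc b ltac:(lra)) (f b) Hp) as [d [Hd Hd']].
    set (t := Rmin z (b + d/2)).
    assert (Ht1 : b < t <= z). { unfold t. split. apply Rmin_glb_lt; lra. apply Rmin_l. }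
    assert (Ht2 : t <= b + d/2) by apply Rmin_r.
    assert (E t). { split. lra. intros s Hs. destruct (Rlt_le_dec s b). apply Hpos; lra.
      assert (Rabs (s - b) < d). { rewrite Rabs_right; lra. }
      specialize (Hd' s H). apply Rabs_def2 in Hd'. lra. }
    specialize (Hub t H). lra. }
  exists b. split. destruct (Req_dec x b). subst. lra. lra. split. lra. auto.
Qed.

Lemma first_zero_left f z x : z < x -> 0 < f x -> f z <= 0 ->
  (forall t, z <= t <= x -> continuity_pt f t) ->
  exists a, z <= a < x /\ f a = 0 /\ forall t, a < t <= x -> 0 < f t.
Proof.
  intros Hzx Hx Hz Hc.
  destruct (first_zero_right (fun t => f (- t)) (- x) (- z)) as [b [Hb1 [Hb2 Hb3]]].
  - lra.
  - rewrite Ropp_involutive. auto.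
  - rewrite Ropp_involutive. auto.
  - intros t Ht. apply (continuity_pt_comp (fun t => - t) f t).
    apply continuity_pt_opp, continuity_pt_id. apply Hc. lra.
  - exists (- b). split. lra. split. auto. intros t Ht.
    replace t with (- - t) by ring. apply Hb3. lra.
Qed.

Lemma deriv_sign_left f b l d : is_derive f b l -> f b = 0 -> 0 < d ->
  (forall t, b - d < t < b -> 0 < f t) -> l <= 0.
Proof.
  intros Hd Hb Hdp Hpos. apply Rnot_lt_le. intro Hl.
  apply is_derive_Reals in Hd. destruct (Hd l Hl) as [e He].
  set (h := - Rmin (e/2) (d/2)).
  assert (Hm1 : 0 < Rmin (e/2) (d/2)). { apply Rmin_glb_lt. pose proof (cond_pos e). lra. lra. }
  assert (Hm2 : Rmin (e/2) (d/2) <= e/2) by apply Rmin_l.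
  assert (Hm3 : Rmin (e/2) (d/2) <= d/2) by apply Rmin_r.
  assert (Hh : h < 0) by (unfold h; lra).
  assert (Habs : Rabs h < e). { rewrite Rabs_left by lra. unfold h. pose proof (cond_pos e). lra. }
  specialize (He h ltac:(lra) Habs). rewrite Hb in He.
  assert (Hf : 0 < f (b + h)) by (apply Hpos; unfold h; lra).
  assert (Hq : (f (b + h) - 0) / h < 0).
  { unfold Rdiv. rewrite Rminus_0_r. assert (/h < 0) by (apply Rinv_lt_0_compat; auto). nra. }
  apply Rabs_def2 in He. lra.
Qed.

Lemma deriv_sign_right f a l d : is_derive f a l -> f a = 0 -> 0 < d ->
  (forall t, a < t < a + d -> 0 < f t) -> 0 <= l.
Proof.
  intros Hd Hb Hdp Hpos. apply Rnot_lt_le. intro Hl.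
  apply is_derive_Reals in Hd. destruct (Hd (- l) ltac:(lra)) as [e He].
  set (h := Rmin (e/2) (d/2)).
  assert (Hm1 : 0 < h). { apply Rmin_glb_lt. pose proof (cond_pos e). lra. lra. }
  assert (Hm2 : h <= e/2) by apply Rmin_l.
  assert (Hm3 : h <= d/2) by apply Rmin_r.
  assert (Habs : Rabs h < e). { rewrite Rabs_right by lra. pose proof (cond_pos e). lra. }
  specialize (He h ltac:(lra) Habs). rewrite Hb in He.
  assert (Hf : 0 < f (a + h)) by (apply Hpos; lra).
  assert (Hq : 0 < (f (a + h) - 0) / h).
  { unfold Rdiv. rewrite Rminus_0_r. apply Rmult_lt_0_compat. auto. apply Rinv_0_lt_compat. auto. }
  apply Rabs_def2 in He. lra.
Qed.

Lemma strict_inc f df a b : a < b -> (forall t, a <= t <= b -> is_derive f t (df t)) ->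
  (forall t, a < t < b -> 0 < df t) -> f a < f b.
Proof.
  intros Hab Hd Hp.
  destruct (MVT_cor2 f df a b Hab) as [c [Hc1 Hc2]].
  - intros t Ht. apply is_derive_Reals. auto.
  - specialize (Hp c Hc2). assert (0 < df c * (b - a)) by (apply Rmult_lt_0_compat; lra). lra.
Qed.

Lemma is_derive_mult' (f g : R -> R) x df dg : is_derive f x df -> is_derive g x dg ->
  is_derive (fun t => f t * g t) x (df * g x + f x * dg).
Proof. intros H1 H2. apply (is_derive_mult f g x df dg H1 H2). intros; apply Rmult_comm. Qed.

Lemma is_derive_comp' (f g : R -> R) x df dg : is_derive f (g x) df -> is_derive g x dg ->
  is_derive (fun t => f (g t)) x (dg * df).
Proof. intros H1 H2. apply (is_derive_comp f g x df dg H1 H2). Qed.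

Lemma is_derive_minus' (f g : R -> R) x df dg : is_derive f x df -> is_derive g x dg ->
  is_derive (fun t => f t - g t) x (df - dg).
Proof. intros H1 H2. apply (is_derive_minus f g x df dg H1 H2). Qed.

Lemma is_derive_eq (f : R -> R) x l l' : is_derive f x l -> l = l' -> is_derive f x l'.
Proof. intros H ->. auto. Qed.

Lemma is_derive_cont (f : R -> R) x l : is_derive f x l -> continuity_pt f x.
Proof. intros H. apply continuity_pt_filterlim. apply (ex_derive_continuous (K:=R_AbsRing) (V:=R_NormedModule)). exists l. auto. Qed.

Lemma at_left_lt x : at_left x (fun r => r < x).
Proof. exists (mkposreal 1 Rlt_0_1). intros; auto. Qed.

Lemma at_right_gt' x : at_right x (fun r => x < r).
Proof. exists (mkposreal 1 Rlt_0_1). intros; auto. Qed.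

Definition Pf (u : R -> R) r := r * Derive u r.
Definition Wf c (u : R -> R) r := Pf u r * J0 (c*r) - u r * Vb (c*r).

Lemma lin_derive c r : is_derive (fun s => c * s) r c.
Proof. auto_derive. auto. ring. Qed.

Lemma W_derive n alpha kappa c (u : R -> R) r : 0 < r -> 0 <= alpha ->
  is_derive u r (Derive u r) ->
  is_derive (fun s => s * Derive u s) r
     (IZR n ^ 2 / r * u r - 2 * r * (u r) ^ 3 / (1 + alpha * (u r) ^ 2) + 2 * kappa * r * u r) ->
  is_derive (Wf c u) r (r * u r * J0 (c*r) *
     (IZR n^2/r^2 - 2*(u r)^2/(1+alpha*(u r)^2) + 2*kappa + c^2)).
Proof.
  intros Hr Ha Hu HP. unfold Wf, Pf.
  eapply is_derive_eq.
  - apply is_derive_minus'.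
    + apply is_derive_mult'. exact HP.
      apply (is_derive_comp' J0 (fun s => c * s)). apply J0_derive. apply lin_derive.
    + apply is_derive_mult'. exact Hu.
      apply (is_derive_comp' Vb (fun s => c * s)). apply Vb_derive. apply lin_derive.
  - unfold Vb. match goal with |- ?a = ?b => change (@eq R a b) end. assert (0 < 1 + alpha * u r ^ 2) by (pose proof (pow2_ge_0 (u r)); nra).
    field. lra.
Qed.

Lemma J0_cont x : continuous J0 x.
Proof. apply (ex_derive_continuous (K:=R_AbsRing) (V:=R_NormedModule)). exists (J0d x). apply J0_derive. Qed.

Lemma Vb_cont x : continuous Vb x.
Proof. apply (ex_derive_continuous (K:=R_AbsRing) (V:=R_NormedModule)). exists (- x * J0 x). apply Vb_derive. Qed.

Lemma J0_pos r0 x : first_pos_zero_J0 r0 -> 0 <= x < r0 -> 0 < J0 x.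
Proof.
  intros [Hr0 [Hz Hnz]] Hx. apply Rnot_le_lt. intro Hle.
  destruct (Req_dec x 0) as [->|Hx0]. rewrite J0_0 in Hle. lra.
  assert (Hc : continuity J0). { intro y. apply continuity_pt_filterlim. apply J0_cont. }
  destruct (IVT_gen J0 0 x 0 Hc) as [y [Hy1 Hy2]].
  - rewrite J0_0. split. rewrite Rmin_right by lra. lra. rewrite Rmax_left by lra. lra.
  - rewrite Rmin_left in Hy1 by lra. rewrite Rmax_right in Hy1 by lra.
    destruct (Req_dec y 0) as [->|Hy0]. rewrite J0_0 in Hy2. lra.
    apply (Hnz y). lra. auto.
Qed.

Lemma B_pos n2 alpha kappa r0 Rad r y : 1 <= n2 -> 0 < alpha -> 0 < r < Rad ->
  / alpha - (r0 ^ 2 + n2) / (2 * Rad ^ 2) <= kappa ->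
  0 < n2/r^2 - 2*y^2/(1+alpha*y^2) + 2*kappa + (r0/Rad)^2.
Proof.
  intros Hn Ha Hr Hk.
  assert (Hd : 0 < 1 + alpha * y ^ 2) by (pose proof (pow2_ge_0 y); nra).
  assert (E1 : 2*y^2/(1+alpha*y^2) = 2/alpha - 2/(alpha*(1+alpha*y^2))) by (field; lra).
  assert (P1 : 0 < 2/(alpha*(1+alpha*y^2))).
  { apply Rdiv_lt_0_compat. lra. apply Rmult_lt_0_compat; lra. }
  assert (E2 : (r0 ^ 2 + n2) / (2 * Rad ^ 2) = (r0/Rad)^2/2 + n2/Rad^2/2) by (field; lra).
  assert (P2 : n2/Rad^2 < n2/r^2).
  { unfold Rdiv. apply Rmult_lt_compat_l. lra. apply Rinv_lt_contravar.
    apply Rmult_lt_0_compat; apply pow_lt; lra. simpl. nra. }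
  assert (E3 : / alpha = 1 / alpha) by (field; lra).
  assert (E4 : 2 / alpha = 2 * (1/alpha)) by (unfold Rdiv; ring).
  rewrite E1, E4. rewrite E2, E3 in Hk.
  set (A := 1/alpha) in *. set (C := (r0/Rad)^2) in *. set (D := n2/Rad^2) in *.
  set (G := n2/r^2) in *. set (H := 2/(alpha*(1+alpha*y^2))) in *. lra.
Qed.

Lemma F_bound n2 alpha kappa Rad q xi y : 0 <= n2 -> 0 < alpha -> 0 < q <= xi -> xi <= Rad ->
  Rabs y < 1 ->
  Rabs (n2 / xi * y - 2 * xi * y ^ 3 / (1 + alpha * y ^ 2) + 2 * kappa * xi * y)
   <= n2 / q + 2 * Rad + 2 * Rabs kappa * Rad.
Proof.
  intros Hn Ha Hq HR Hy.
  assert (Hd : 0 < 1 + alpha * y ^ 2) by (pose proof (pow2_ge_0 y); nra).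
  set (s := y ^ 2 / (1 + alpha * y ^ 2)).
  assert (Hs0 : 0 <= s). { unfold s. apply Rdiv_le_0_compat. apply pow2_ge_0. lra. }
  assert (Hy2 : y ^ 2 < 1). { rewrite <- pow2_abs. pose proof (Rabs_pos y). nra. }
  assert (Hs1 : s <= 1).
  { unfold s. apply Rmult_le_reg_r with (1 + alpha * y ^ 2). lra. unfold Rdiv.
    rewrite Rmult_assoc, Rinv_l by lra. pose proof (pow2_ge_0 y). nra. }
  replace (n2 / xi * y - 2 * xi * y ^ 3 / (1 + alpha * y ^ 2) + 2 * kappa * xi * y)
    with (y * (n2 / xi - 2 * xi * s + 2 * kappa * xi)) by (unfold s; field; lra).
  rewrite Rabs_mult.
  assert (Hi : Rabs (n2 / xi - 2 * xi * s + 2 * kappa * xi) <= n2 / q + 2 * Rad + 2 * Rabs kappa * Rad).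
  { eapply Rle_trans. apply Rabs_triang. eapply Rle_trans. apply Rplus_le_compat_r. apply Rabs_triang.
    rewrite Rabs_Ropp.
    assert (Rabs (n2/xi) <= n2/q).
    { rewrite Rabs_pos_eq. unfold Rdiv. apply Rmult_le_compat_l. lra. apply Rinv_le_contravar; lra.
      apply Rdiv_le_0_compat; lra. }
    assert (Rabs (2 * xi * s) <= 2 * Rad). { rewrite Rabs_pos_eq. nra. nra. }
    assert (Rabs (2 * kappa * xi) <= 2 * Rabs kappa * Rad).
    { rewrite !Rabs_mult. rewrite (Rabs_pos_eq 2) by lra. rewrite (Rabs_pos_eq xi) by lra.
      pose proof (Rabs_pos kappa). nra. }
    lra. }
  pose proof (Rabs_pos y). pose proof (Rabs_pos (n2 / xi - 2 * xi * s + 2 * kappa * xi)).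
  assert (0 <= n2/q) by (apply Rdiv_le_0_compat; lra). pose proof (Rabs_pos kappa).
  nra.
Qed.

Lemma cont_scaled (g : R -> R) c x : (forall y, continuous g y) -> continuous (fun r => g (c * r)) x.
Proof.
  intros Hg. apply (continuous_comp (fun r => c * r) g).
  apply (ex_derive_continuous (K:=R_AbsRing) (V:=R_NormedModule)). exists c. apply lin_derive.
  apply Hg.
Qed.

Lemma W_lim (n : Z) alpha kappa Rad r0 (u : R -> R) e :
  0 < alpha -> 0 < Rad -> J0 r0 = 0 -> 0 < e ->
  (forall r, 0 < r < Rad -> is_derive (fun s => s * Derive u s) r
       (IZR n ^ 2 / r * u r - 2 * r * (u r) ^ 3 / (1 + alpha * (u r) ^ 2) + 2 * kappa * r * u r)) ->
  filterlim u (at_left Rad) (locally 0) ->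
  at_left Rad (fun r => Rabs (Wf (r0/Rad) u r) < e).
Proof.
  intros Ha HR HJ He HP HlR.
  set (c := r0 / Rad).
  assert (HcR : c * Rad = r0) by (unfold c; field; lra).
  destruct (at_left_ex _ _ (lim_to_eps u _ 0 1 HlR Rlt_0_1)) as [d [Hd Hd']].
  set (q := Rmax (Rad/2) (Rad - d/2)).
  assert (Hq1 : Rad/2 <= q) by apply Rmax_l.
  assert (Hq2 : Rad - d/2 <= q) by apply Rmax_r.
  assert (Hq3 : q < Rad) by (apply Rmax_lub_lt; lra).
  set (M := IZR n ^ 2 / q + 2 * Rad + 2 * Rabs kappa * Rad).
  set (K := Rabs (Pf u q) + M * Rad).
  assert (HM : 0 <= M).
  { unfold M. pose proof (pow2_ge_0 (IZR n)). pose proof (Rabs_pos kappa).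
    assert (0 <= IZR n ^ 2 / q) by (apply Rdiv_le_0_compat; lra). nra. }
  assert (HK0 : 0 <= K) by (unfold K; pose proof (Rabs_pos (Pf u q)); nra).
  assert (HK : forall r, q < r < Rad -> Rabs (Pf u r) <= K).
  { intros r Hr.
    destruct (MVT_cor2 (fun s => s * Derive u s)
      (fun s => IZR n ^ 2 / s * u s - 2 * s * (u s) ^ 3 / (1 + alpha * (u s) ^ 2) + 2 * kappa * s * u s)
      q r ltac:(lra)) as [xi [Hxi1 Hxi2]].
    { intros t Ht. apply is_derive_Reals. apply HP. lra. }
    assert (Hb : Rabs (IZR n ^ 2 / xi * u xi - 2 * xi * (u xi) ^ 3 / (1 + alpha * (u xi) ^ 2) + 2 * kappa * xi * u xi) <= M).
    { apply F_bound. apply pow2_ge_0. auto. lra. lra.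
      specialize (Hd' xi ltac:(lra)). rewrite Rminus_0_r in Hd'. auto. }
    unfold Pf in *. unfold K.
    replace (r * Derive u r) with (q * Derive u q + (IZR n ^ 2 / xi * u xi - 2 * xi * (u xi) ^ 3 / (1 + alpha * (u xi) ^ 2) + 2 * kappa * xi * u xi) * (r - q)) by lra.
    eapply Rle_trans. apply Rabs_triang. apply Rplus_le_compat_l.
    rewrite Rabs_mult. rewrite (Rabs_pos_eq (r - q)) by lra.
    pose proof (Rabs_pos (IZR n ^ 2 / xi * u xi - 2 * xi * (u xi) ^ 3 / (1 + alpha * (u xi) ^ 2) + 2 * kappa * xi * u xi)).
    nra. }
  set (V0 := Rabs (Vb r0)).
  assert (HV0 : 0 <= V0) by apply Rabs_pos.
  assert (Hi : at_left Rad (fun r => Rabs (J0 (c * r) - J0 (c * Rad)) < e / (2 * (K + 1)))).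
  { apply (at_left_cont (fun r => J0 (c * r))). apply cont_scaled. apply J0_cont.
    apply Rdiv_lt_0_compat. lra. lra. }
  assert (Hii : at_left Rad (fun r => Rabs (Vb (c * r) - Vb (c * Rad)) < 1)).
  { apply (at_left_cont (fun r => Vb (c * r))). apply cont_scaled. apply Vb_cont. lra. }
  assert (Hiii : at_left Rad (fun r => Rabs (u r - 0) < e / (2 * (V0 + 1)))).
  { apply (lim_to_eps u (at_left Rad) 0). auto. apply Rdiv_lt_0_compat. lra. lra. }
  generalize (filter_and _ _ (filter_and _ _ Hi Hii) (filter_and _ _ Hiii (filter_and _ _ (at_left_gt q Rad Hq3) (at_left_lt Rad)))).
  apply filter_imp. intros r [[H1 H2] [H3 [H4 Hr]]].
  rewrite HcR, HJ, Rminus_0_r in H1. rewrite HcR in H2. rewrite Rminus_0_r in H3.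
  unfold Wf.
  specialize (HK r (conj H4 Hr)).
  assert (HV : Rabs (Vb (c * r)) <= V0 + 1).
  { unfold V0. pose proof (Rabs_triang_inv (Vb (c * r)) (Vb r0)). lra. }
  eapply Rle_lt_trans. unfold Rminus. apply Rabs_triang. rewrite Rabs_Ropp, !Rabs_mult.
  assert (A1 : Rabs (Pf u r) * Rabs (J0 (c * r)) <= K * (e / (2 * (K + 1)))).
  { apply Rmult_le_compat; try apply Rabs_pos; lra. }
  assert (A2 : Rabs (u r) * Rabs (Vb (c * r)) <= e / (2 * (V0 + 1)) * (V0 + 1)).
  { apply Rmult_le_compat; try apply Rabs_pos; lra. }
  assert (A3 : K * (e / (2 * (K + 1))) < e / 2).
  { apply Rmult_lt_reg_r with (2 * (K + 1)). lra.
    replace (K * (e / (2 * (K + 1))) * (2 * (K + 1))) with (K * e) by (field; lra). nra. }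
  assert (A4 : e / (2 * (V0 + 1)) * (V0 + 1) = e / 2) by (field; lra).
  lra.
Qed.

Lemma core (n : Z) alpha Rad kappa r0 (u : R -> R) p :
  1 <= IZR n ^ 2 -> 0 < alpha -> 0 < Rad -> first_pos_zero_J0 r0 ->
  vortex_ode n alpha kappa Rad u -> vortex_bc Rad u -> 0 < p < Rad -> 0 < u p ->
  / alpha - (r0 ^ 2 + IZR n ^ 2) / (2 * Rad ^ 2) <= kappa -> False.
Proof.
  intros Hn Ha HR Hr0 [Hex Hode] [Hu0 [HuR [Hl0 HlR]]] Hp Hup Hk.
  set (c := r0 / Rad).
  pose proof Hr0 as [Hr0p [HJr0 _]].
  assert (Hdu : forall r, 0 < r < Rad -> is_derive u r (Derive u r)).
  { intros. apply Derive_correct. auto. }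
  assert (Hw : forall r, 0 <= r < Rad -> 0 < J0 (c * r)).
  { intros r Hr. apply (J0_pos r0). auto. unfold c.
    assert (E : r0 / Rad * r = r0 - r0 * (Rad - r) / Rad) by (field; lra).
    assert (0 < r0 * (Rad - r) / Rad) by (apply Rdiv_lt_0_compat; [apply Rmult_lt_0_compat|]; lra).
    assert (0 <= r0 / Rad * r) by (apply Rmult_le_pos; [apply Rdiv_le_0_compat|]; lra).
    lra. }
  set (B := fun r => IZR n^2/r^2 - 2*(u r)^2/(1+alpha*(u r)^2) + 2*kappa + c^2).
  assert (HB : forall r, 0 < r < Rad -> 0 < B r).
  { intros r Hr. unfold B, c. apply B_pos with (r0 := r0) (Rad := Rad); auto. }
  set (dW := fun r => r * u r * J0 (c*r) * B r).
  assert (HWd : forall r, 0 < r < Rad -> is_derive (Wf c u) r (dW r)).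
  { intros r Hr. apply W_derive. lra. lra. apply Hdu; auto. apply Hode; auto. }
  assert (Hucont : forall t, 0 < t < Rad -> continuity_pt u t).
  { intros. eapply is_derive_cont. apply Hdu; auto. }
  assert (HWinc : forall a b, 0 < a -> b < Rad -> a < b -> (forall t, a < t < b -> 0 < u t) ->
     Wf c u a < Wf c u b).
  { intros a b H1 H2 H3 H4. apply strict_inc with dW. auto. intros; apply HWd; lra.
    intros t Ht. unfold dW. specialize (HB t ltac:(lra)). specialize (Hw t ltac:(lra)).
    specialize (H4 t Ht). apply Rmult_lt_0_compat; [|auto].
    apply Rmult_lt_0_compat; [|auto]. apply Rmult_lt_0_compat; lra. }
  destruct (Rle_or_lt 0 (Wf c u p)) as [HW0|HW0].
  - assert (HA : forall z, p <= z < Rad -> 0 < u z).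
    { intros z Hz. apply Rnot_le_lt. intro Hz0.
      assert (Hpz : p < z) by (destruct (Req_dec p z); [subst; lra|lra]).
      destruct (first_zero_right u p z Hpz Hup Hz0) as [b [Hb1 [Hb2 Hb3]]].
      { intros; apply Hucont; lra. }
      assert (Hdb : Derive u b <= 0).
      { apply (deriv_sign_left u b _ (b - p)). apply Hdu; lra. auto. lra. intros; apply Hb3; lra. }
      assert (Wf c u p < Wf c u b). { apply HWinc; try lra. intros; apply Hb3; lra. }
      assert (Wf c u b <= 0).
      { unfold Wf, Pf. rewrite Hb2. specialize (Hw b ltac:(lra)). rewrite Rmult_0_l, Rminus_0_r.
        assert (b * Derive u b <= 0) by nra. nra. }
      lra. }
    set (q := (p + Rad)/2).
    assert (Hq : Wf c u p < Wf c u q).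
    { apply HWinc; unfold q; try lra. intros; apply HA; lra. }
    assert (Hlim : at_left Rad (fun r => Rabs (Wf c u r) < Wf c u q)).
    { apply (W_lim n alpha kappa); auto; lra. }
    destruct (at_left_pt Rad _ (filter_and _ _ Hlim (at_left_gt q Rad ltac:(unfold q; lra))))
      as [r [Hr [Hr1 Hr2]]].
    assert (Wf c u q < Wf c u r). { apply HWinc; unfold q in *; try lra. intros; apply HA; lra. }
    apply Rabs_def2 in Hr1. lra.
  - assert (HBp : forall z, 0 < z <= p -> 0 < u z).
    { intros z Hz. apply Rnot_le_lt. intro Hz0.
      assert (Hzp : z < p) by (destruct (Req_dec z p); [subst; lra|lra]).
      destruct (first_zero_left u z p Hzp Hup Hz0) as [a [Ha1 [Ha2 Ha3]]].
      { intros; apply Hucont; lra. }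
      assert (Hda : 0 <= Derive u a).
      { apply (deriv_sign_right u a _ (p - a)). apply Hdu; lra. auto. lra. intros; apply Ha3; lra. }
      assert (Wf c u a < Wf c u p). { apply HWinc; try lra. intros; apply Ha3; lra. }
      assert (0 <= Wf c u a).
      { unfold Wf, Pf. rewrite Ha2. specialize (Hw a ltac:(lra)). rewrite Rmult_0_l, Rminus_0_r.
        assert (0 <= a * Derive u a) by nra. nra. }
      lra. }
    set (eps := - Wf c u p / 2).
    assert (Heps : 0 < eps) by (unfold eps; lra).
    assert (Hv : at_right 0 (fun r => Rabs (Vb (c * r) - Vb (c * 0)) < 1)).
    { apply loc_to_right. apply (lim_to_eps (fun r => Vb (c * r)) (locally 0)). apply cont_scaled. apply Vb_cont. lra. }
    assert (Hu : at_right 0 (fun r => Rabs (u r - 0) < eps)).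
    { apply (lim_to_eps u (at_right 0) 0). auto. auto. }
    destruct (at_right_ex _ _ (filter_and _ _ Hv Hu)) as [d [Hd Hd']].
    assert (HVb0 : Vb (c * 0) = 0) by (unfold Vb; rewrite Rmult_0_r; ring).
    set (d' := Rmin d p).
    assert (Hd'1 : d' <= d) by apply Rmin_l.
    assert (Hd'2 : d' <= p) by apply Rmin_r.
    assert (Hd'3 : 0 < d') by (apply Rmin_glb_lt; lra).
    assert (Hneg : forall r, 0 < r < d' -> Derive u r < 0).
    { intros r Hr. destruct (Hd' r ltac:(lra)) as [H1 H2]. rewrite HVb0, Rminus_0_r in H1.
      rewrite Rminus_0_r in H2.
      assert (HWr : Wf c u r < Wf c u p).
      { apply HWinc; try lra. intros; apply HBp; lra. }
      assert (Rabs (u r * Vb (c * r)) < eps).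
      { rewrite Rabs_mult. pose proof (Rabs_pos (u r)). pose proof (Rabs_pos (Vb (c * r))). nra. }
      apply Rabs_def2 in H.
      assert (E : Wf c u r = r * Derive u r * J0 (c*r) - u r * Vb (c*r)) by reflexivity. unfold eps in H.
      specialize (Hw r ltac:(lra)).
      assert (r * Derive u r * J0 (c * r) < 0) by lra.
      apply Rnot_le_lt. intro. assert (0 <= r * Derive u r) by nra. nra. }
    set (s := d' / 2).
    assert (Hus : 0 < u s) by (apply HBp; unfold s; lra).
    destruct (at_right_ex _ _ (lim_to_eps u (at_right 0) 0 (u s) Hl0 Hus)) as [d2 [Hd2 Hd2']].
    set (r := Rmin (d2/2) (s/2)).
    assert (Hr1 : r <= d2/2) by apply Rmin_l.
    assert (Hr2 : r <= s/2) by apply Rmin_r.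
    assert (Hr3 : 0 < r) by (apply Rmin_glb_lt; unfold s; lra).
    assert (Hlt : - u r < - u s).
    { apply (strict_inc (fun t => - u t) (fun t => - Derive u t) r s). unfold s in *; lra.
      intros t Ht. apply is_derive_opp'. apply Hdu. unfold s in *; lra.
      intros t Ht. specialize (Hneg t ltac:(unfold s in *; lra)). lra. }
    specialize (Hd2' r ltac:(lra)). rewrite Rminus_0_r in Hd2'. apply Rabs_def2 in Hd2'. lra.
Qed.

Lemma opp_lim F {FF : Filter F} (u : R -> R) : filterlim u F (locally 0) -> filterlim (fun x => - u x) F (locally 0).
Proof.
  intros H. eapply filterlim_comp. exact H.
  assert (H' : filterlim (fun x : R => - x) (locally 0) (locally (- 0))).
  { apply continuity_pt_filterlim. apply continuity_pt_opp, continuity_pt_id. }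
  rewrite Ropp_0 in H'. exact H'.
Qed.

Theorem theorem2p1 (n : Z) (alpha Rad kappa r0 : R) (u : R -> R) :
  (1 <= Z.abs n)%Z -> 0 < alpha -> 0 < Rad ->
  first_pos_zero_J0 r0 ->
  vortex_ode n alpha kappa Rad u ->
  vortex_bc Rad u ->
  (exists r, 0 < r < Rad /\ u r <> 0) ->
  finite_energy alpha Rad u ->
  kappa < / alpha - (r0 ^ 2 + IZR n ^ 2) / (2 * Rad ^ 2).
Proof.
  intros Hn Ha HR Hr0 Hode Hbc [p [Hp Hup]] _.
  apply Rnot_le_lt. intro Hk.
  assert (Hn2 : 1 <= IZR n ^ 2).
  { rewrite <- pow2_abs, <- abs_IZR. apply IZR_le in Hn. simpl in *. nra. }
  destruct (Rlt_or_le 0 (u p)) as [Hpos|Hneg].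
  - apply (core n alpha Rad kappa r0 u p); auto.
  - apply (core n alpha Rad kappa r0 (fun x => - u x) p); auto.
    + destruct Hode as [Hex Hd]. split.
      * intros r Hr. destruct (Hex r Hr) as [l Hl]. exists (- l). apply is_derive_opp'. auto.
      * intros r Hr. apply (is_derive_ext (fun t => - (t * Derive u t))).
        { intro t. rewrite Derive_opp. match goal with |- ?a = ?b => change (@eq R a b) end. ring. }
        eapply is_derive_eq. apply is_derive_opp'. apply Hd. auto.
        match goal with |- ?a = ?b => change (@eq R a b) end. assert (0 < 1 + alpha * u r ^ 2) by (pose proof (pow2_ge_0 (u r)); nra). field. lra.
    + destruct Hbc as [H1 [H2 [H3 H4]]]. split. rewrite H1; ring. split. rewrite H2; ring.
      split; apply opp_lim; auto; apply within_filter; apply locally_filter.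
    + assert (u p <> 0) by auto. lra.
Qed.
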